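(* Let $N\geq 1$, let $U\in M_{2N}(\mathbb{C})$ be unitary with $U^{\rm T}=-U$, and let $\Phi^U_{4N}$ be the map defined on block matrices $X=\begin{pmatrix} X_{11} & X_{12}\\ X_{21} & X_{22}\end{pmatrix}$ ($X_{kl}\in M_{2N}(\mathbb{C})$) by $$\Phi^U_{4N}(X)=\frac{1}{2N}\begin{pmatrix} \mathbb{I}_{2N}\,\mathrm{Tr}X_{22} & -\big(X_{12}+UX_{21}^{\rm T}U^\dagger\big)\\ -\big(X_{21}+UX_{12}^{\rm T}U^\dagger\big) & \mathbb{I}_{2N}\,\mathrm{Tr}X_{11}\end{pmatrix}.$$ Let $W=(\mathrm{id}\otimes\Phi^U_{4N})P^+_{4N}$, where $P^+_{4N}=\frac{1}{4N}\sum_{k,l=1}^{4N}|k\rangle\langle l|\otimes|k\rangle\langle l|$. Then $W$ is an optimal entanglement witness: there is no nonzero positive semidefinite operator $A$ on $\mathbb{C}^{4N}\otimes\mathbb{C}^{4N}$ such that $W-A$ is block-positive (i.e. $\langle\psi\otimes\phi|(W-A)|\psi\otimes\phi\rangle\ge 0$ for all $\psi,\phi\in\mathbb{C}^{4N}$).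
   Context: $\{|k\rangle\}$ is the standard basis of $\mathbb{C}^{4N}$; $\mathrm{id}$ is the identity map on $M_{4N}(\mathbb{C})$. An entanglement witness is a block-positive operator that is not positive semidefinite; it is optimal if subtracting any nonzero positive semidefinite operator destroys block-positivity. *)

(* Defs.v *)
From HB Require Import structures.
From mathcomp Require Import all_boot all_order all_algebra.
From mathcomp Require Import reals.
From mathcomp Require Export complex mxtens.
Set Implicit Arguments. Unset Strict Implicit. Unset Printing Implicit Defensive.
Import Order.TTheory GRing.Theory Num.Theory.
Local Open Scope ring_scope.
Local Open Scope sesquilinear_scope.

Section Defs.
Variable R : realType.
Local Notation C := (R[i]).

Definition adjmx {m n} (A : 'M[C]_(m, n)) : 'M[C]_(n, m) := (A ^t*)%sesqui.

Definition psdmx {n} (A : 'M[C]_n) : Prop :=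
  adjmx A = A /\ forall v : 'cV[C]_n, 0 <= (adjmx v *m A *m v) ord0 ord0.

Definition block_positive {n m} (A : 'M[C]_(n * m)) : Prop :=
  forall (psi : 'cV[C]_n) (phi : 'cV[C]_m),
    0 <= (adjmx (psi *t phi) *m A *m (psi *t phi)) ord0 ord0.

Definition entanglement_witness {n m} (W : 'M[C]_(n * m)) : Prop :=
  block_positive W /\ ~ psdmx W.

Definition optimal_EW {n m} (W : 'M[C]_(n * m)) : Prop :=
  entanglement_witness W /\
  ~ exists A : 'M[C]_(n * m), A != 0 /\ psdmx A /\ block_positive (W - A).

Definition PhiU (N : nat) (U : 'M[C]_(2 * N)) (X : 'M[C]_(2 * N + 2 * N))
  : 'M[C]_(2 * N + 2 * N) :=
  let X11 := ulsubmx X in let X12 := ursubmx X in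
  let X21 := dlsubmx X in let X22 := drsubmx X in
  (2 * N)%:R^-1 *:
  block_mx ((\tr X22) *: 1%:M) (- (X12 + U *m X21^T *m adjmx U))
           (- (X21 + U *m X12^T *m adjmx U)) ((\tr X11) *: 1%:M).

(* W = (id ⊗ Phi) P^+, with P^+ = 1/(4N) sum_{k,l} |k><l| ⊗ |k><l| *)
Definition W_U (N : nat) (U : 'M[C]_(2 * N)) : 'M[C]_((2 * N + 2 * N) * (2 * N + 2 * N)) :=
  (4 * N)%:R^-1 *:
  \sum_(k < 2 * N + 2 * N) \sum_(l < 2 * N + 2 * N)
     (delta_mx k l *t PhiU U (delta_mx k l)).
End Defs.

(* Main.v *)
Require Import Defs.
From HB Require Import structures.
From mathcomp Require Import all_boot all_order all_algebra.
From mathcomp Require Import reals complex mxtens.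
From mathcomp Require Import ring.
Set Implicit Arguments. Unset Strict Implicit. Unset Printing Implicit Defensive.
Import Order.TTheory GRing.Theory Num.Theory.
Local Open Scope ring_scope.


Section Dot.
Variable R : realType.
Local Notation C := (R[i]).

Definition dot {n} (u v : 'cV[C]_n) : C := (adjmx u *m v) 0 0.

Lemma dotE n (u v : 'cV[C]_n) : dot u v = \sum_i (u i 0)^* * v i 0.
Proof. by rewrite /dot /adjmx mxE; apply: eq_bigr => i _; rewrite !mxE. Qed.

Lemma dotDl n (u w v : 'cV[C]_n) : dot (u + w) v = dot u v + dot w v.
Proof. by rewrite !dotE -big_split; apply: eq_bigr => i _; rewrite !mxE rmorphD mulrDl. Qed.
Lemma dotDr n (u w v : 'cV[C]_n) : dot v (u + w) = dot v u + dot v w.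
Proof. by rewrite !dotE -big_split; apply: eq_bigr => i _; rewrite !mxE mulrDr. Qed.
Lemma dotZl n k (u v : 'cV[C]_n) : dot (k *: u) v = k^* * dot u v.
Proof. by rewrite !dotE mulr_sumr; apply: eq_bigr => i _; rewrite !mxE rmorphM mulrA. Qed.
Lemma dotZr n k (u v : 'cV[C]_n) : dot v (k *: u) = k * dot v u.
Proof. by rewrite !dotE mulr_sumr; apply: eq_bigr => i _; rewrite !mxE mulrCA. Qed.
Lemma dotNl n (u v : 'cV[C]_n) : dot (- u) v = - dot u v.
Proof. by rewrite -scaleN1r dotZl rmorphN rmorph1 mulN1r. Qed.
Lemma dotNr n (u v : 'cV[C]_n) : dot v (- u) = - dot v u.
Proof. by rewrite -scaleN1r dotZr mulN1r. Qed.
Lemma dotBl n (u w v : 'cV[C]_n) : dot (u - w) v = dot u v - dot w v.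
Proof. by rewrite dotDl dotNl. Qed.
Lemma dotBr n (u w v : 'cV[C]_n) : dot v (u - w) = dot v u - dot v w.
Proof. by rewrite dotDr dotNr. Qed.
Lemma dot0l n (v : 'cV[C]_n) : dot 0 v = 0.
Proof. by rewrite dotE big1 // => i _; rewrite mxE rmorph0 mul0r. Qed.
Lemma dot0r n (v : 'cV[C]_n) : dot v 0 = 0.
Proof. by rewrite dotE big1 // => i _; rewrite mxE mulr0. Qed.
Lemma dotC n (u v : 'cV[C]_n) : dot v u = (dot u v)^*.
Proof. by rewrite !dotE rmorph_sum; apply: eq_bigr => i _ /=; rewrite rmorphM /= conjCK mulrC. Qed.
Lemma dot_ge0 n (u : 'cV[C]_n) : 0 <= dot u u.
Proof. by rewrite dotE sumr_ge0 // => i _; rewrite -normCKC exprn_ge0. Qed.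
Lemma dot_eq0 n (u : 'cV[C]_n) : dot u u = 0 -> u = 0.
Proof.
rewrite dotE => /eqP; rewrite psumr_eq0 => [/allP H|i _]; last by rewrite -normCKC exprn_ge0.
apply/matrixP => i j; rewrite [j]ord1 mxE.
have := H i (mem_index_enum _); rewrite -normCKC /= expf_eq0 /= normr_eq0.
by move/eqP.
Qed.
Lemma dot_real n (u : 'cV[C]_n) : (dot u u)^* = dot u u.
Proof. exact: geC0_conj (dot_ge0 u). Qed.

Lemma adjmxM m n p (A : 'M[C]_(m, n)) (B : 'M[C]_(n, p)) :
  adjmx (A *m B) = adjmx B *m adjmx A.
Proof. by rewrite /adjmx trmx_mul map_mxM. Qed.
Lemma adjmxK m n (A : 'M[C]_(m, n)) : adjmx (adjmx A) = A.
Proof. by apply/matrixP => i j; rewrite !mxE conjCK. Qed.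

Lemma dot_mulmx m n (A : 'M[C]_(m, n)) u v : dot u (A *m v) = dot (adjmx A *m u) v.
Proof. by rewrite /dot adjmxM adjmxK mulmxA. Qed.

Lemma adj_col m1 m2 (a : 'cV[C]_m1) (b : 'cV[C]_m2) :
  adjmx (col_mx a b) = row_mx (adjmx a) (adjmx b).
Proof. by rewrite /adjmx tr_col_mx map_row_mx. Qed.

Lemma dot_col m1 m2 (a x : 'cV[C]_m1) (b y : 'cV[C]_m2) :
  dot (col_mx a b) (col_mx x y) = dot a x + dot b y.
Proof. by rewrite /dot adj_col mul_row_col mxE. Qed.

Lemma adj_dot n (u v : 'cV[C]_n) : adjmx u *m v = (dot u v)%:M.
Proof. by rewrite {1}[adjmx u *m v]mx11_scalar. Qed.

End Dot.


Section Ineq.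
Variable R : realType.
Local Notation C := (R[i]).

Lemma bessel n (a c x : 'cV[C]_n) : dot a c = 0 -> dot c c = dot a a ->
  `|dot x a|^+2 + `|dot x c|^+2 <= dot a a * dot x x.
Proof.
move=> ac cc.
set al := dot a a; set p := dot x a; set q := dot x c.
have alr : al^* = al by apply: dot_real.
have ax : dot a x = p^* by rewrite dotC.
have cx : dot c x = q^* by rewrite dotC.
have ca : dot c a = 0 by rewrite dotC ac rmorph0.
pose z := al *: x - (p^*) *: a - (q^*) *: c.
have Ez : dot z z = al * (al * dot x x - (`|p|^+2 + `|q|^+2)).
  rewrite /z !dotBl !dotBr !dotZl !dotZr ax cx ac ca cc -/al -/p -/q.
  rewrite !conjCK alr !normCK; ring.
have [al0|alpos] := eqVneq al 0.
  have a0 : a = 0 by apply: dot_eq0.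
  have c0 : c = 0 by apply: dot_eq0; rewrite cc.
  by rewrite /p /q a0 c0 !dot0r normr0 expr0n /= addr0 al0 mul0r.
have algt : 0 < al by rewrite lt_def alpos dot_ge0.
have := dot_ge0 z; rewrite Ez pmulr_rge0 // subr_ge0 //.
Qed.

Lemma scalar_ineq (al be X Y p q r s : C) :
  0 <= al -> 0 <= be -> 0 <= X -> 0 <= Y ->
  `|p|^+2 + `|q|^+2 <= al * X -> `|r|^+2 + `|s|^+2 <= be * Y ->
  0 <= be * X + al * Y - (p * r + q * s) - (p * r + q * s)^*.
Proof.
move=> al0 be0 X0 Y0 hP hS.
have n2 (z : C) : 0 <= `|z|^+2 by rewrite exprn_ge0.
have [alz|alnz] := eqVneq al 0.
  move: hP; rewrite alz mul0r => hP.
  have p0 : `|p|^+2 = 0.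
    apply/eqP; rewrite eq_le n2 andbT; apply: le_trans hP.
    by rewrite lerDl.
  have q0 : `|q|^+2 = 0.
    apply/eqP; rewrite eq_le n2 andbT; apply: le_trans hP.
    by rewrite lerDr.
  move: p0 q0 => /eqP; rewrite expf_eq0 normr_eq0 /= => /eqP ->.
  move=> /eqP; rewrite expf_eq0 normr_eq0 /= => /eqP ->.
  by rewrite !mul0r !addr0 conjC0 !subr0 mulr_ge0.
have [bez|benz] := eqVneq be 0.
  move: hS; rewrite bez mul0r => hS.
  have p0 : `|r|^+2 = 0.
    apply/eqP; rewrite eq_le n2 andbT; apply: le_trans hS.
    by rewrite lerDl.
  have q0 : `|s|^+2 = 0.
    apply/eqP; rewrite eq_le n2 andbT; apply: le_trans hS.
    by rewrite lerDr.
  move: p0 q0 => /eqP; rewrite expf_eq0 normr_eq0 /= => /eqP ->.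
  move=> /eqP; rewrite expf_eq0 normr_eq0 /= => /eqP ->.
  by rewrite !mulr0 !addr0 conjC0 !subr0 mul0r add0r mulr_ge0.
have alp : 0 < al by rewrite lt_def alnz al0.
have bep : 0 < be by rewrite lt_def benz be0.
rewrite -(pmulr_rge0 _ (mulr_gt0 alp bep)).
have alr : al^* = al by apply: geC0_conj.
have ber : be^* = be by apply: geC0_conj.
have -> : al * be * (be * X + al * Y - (p * r + q * s) - (p * r + q * s)^*) =
   be^+2 * (al * X - (`|p|^+2 + `|q|^+2)) + al^+2 * (be * Y - (`|r|^+2 + `|s|^+2))
   + `|be * p - al * r^*|^+2 + `|be * q - al * s^*|^+2.
  rewrite !normCK !rmorphB !rmorphM /= !rmorphD !rmorphM /= !conjCK alr ber; ring.
rewrite !addr_ge0 ?n2 // mulr_ge0 ?exprn_ge0 ?subr_ge0 //.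
Qed.

End Ineq.


Section Phi.
Variable R : realType.
Local Notation C := (R[i]).
Variable N : nat.
Variable U : 'M[C]_(2 * N).

Lemma PhiUD X Y : PhiU U (X + Y) = PhiU U X + PhiU U Y.
Proof.
rewrite /PhiU -scalerDr add_block_mx; congr (_ *: _).
rewrite -[X]submxK -[Y]submxK add_block_mx !block_mxKul !block_mxKur !block_mxKdl !block_mxKdr.
rewrite !mxtraceD !scalerDl ![(_ + _)^T]linearD /= !mulmxDr !mulmxDl.
by congr block_mx; rewrite addrACA opprD.
Qed.

Lemma PhiUZ k X : PhiU U (k *: X) = k *: PhiU U X.
Proof.
rewrite /PhiU scalerA mulrC -scalerA scale_block_mx; congr (_ *: _).
rewrite -[X]submxK scale_block_mx !block_mxKul !block_mxKur !block_mxKdl !block_mxKdr.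
rewrite !mxtraceZ ![(_ *: _)^T]linearZ /= -!scalemxAr -!scalemxAl -!scalerDr.
by congr block_mx; rewrite ?scalerN // scalerA mulrC.
Qed.

Lemma PhiU0 : PhiU U 0 = 0.
Proof. have h := PhiUD 0 0; rewrite addr0 in h; by apply: (@addrI _ (PhiU U 0)); rewrite addr0 -h. Qed.

Lemma PhiU_sum (I : Type) (r : seq I) (P : pred I) (F : I -> 'M[C]_(2*N+2*N)) :
  PhiU U (\sum_(i <- r | P i) F i) = \sum_(i <- r | P i) PhiU U (F i).
Proof. exact: (big_morph (PhiU U) PhiUD PhiU0). Qed.

End Phi.


Section Phi2.
Variable R : realType.
Local Notation C := (R[i]).
Local Notation conjC := (Num.Def.conjC : C -> C).
Variable N : nat.
Variable U : 'M[C]_(2 * N).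

Lemma trace_dot n (b : 'cV[C]_n) : \tr (b *m adjmx b) = dot b b.
Proof. rewrite dotE /mxtrace; apply: eq_bigr => i _; rewrite !mxE big_ord1 !mxE mulrC. done. Qed.

Lemma adj_conj m n (A : 'M[C]_(m, n)) : adjmx (map_mx conjC A) = A^T.
Proof. apply/matrixP => i j; rewrite !mxE conjCK. done. Qed.

Lemma trmx_adj m n (A : 'M[C]_(m, n)) : (adjmx A)^T = map_mx conjC A.
Proof. apply/matrixP => i j; rewrite !mxE. done. Qed.

Lemma tr_outer (a b : 'cV[C]_(2*N)) :
  U *m (b *m adjmx a)^T *m adjmx U = (U *m map_mx conjC a) *m adjmx (U *m map_mx conjC b).
Proof.
by rewrite trmx_mul trmx_adj adjmxM adj_conj !mulmxA.
Qed.

Lemma blk_top n (be : C) (M : 'M[C]_n) (x y : 'cV[C]_n) :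
  dot x (be *: 1%:M *m x + - M *m y) = be * dot x x - dot x (M *m y).
Proof. by rewrite mulNmx dotDr dotNr -scalemxAl mul1mx dotZr. Qed.
Lemma blk_bot n (al : C) (M : 'M[C]_n) (x y : 'cV[C]_n) :
  dot y (- M *m x + al *: 1%:M *m y) = - dot y (M *m x) + al * dot y y.
Proof. by rewrite mulNmx dotDr dotNr -scalemxAl mul1mx dotZr. Qed.


Lemma mul_outer n (a b y : 'cV[C]_n) : a *m adjmx b *m y = dot b y *: a.
Proof. rewrite -mulmxA adj_dot mul_mx_scalar. done. Qed.

Lemma outer2 n (a b c d y : 'cV[C]_n) :
  (a *m adjmx b + c *m adjmx d) *m y = dot b y *: a + dot d y *: c.
Proof. by rewrite mulmxDl !mul_outer. Qed.

Lemma Phi_form (a b x y : 'cV[C]_(2*N)) :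
  let c := U *m map_mx conjC a in let d := U *m map_mx conjC b in
  dot (col_mx x y) (PhiU U (col_mx a b *m adjmx (col_mx a b)) *m col_mx x y) =
  (2 * N)%:R^-1 * (dot b b * dot x x + dot a a * dot y y
     - (dot x a * dot b y + dot x c * dot d y)
     - (dot x a * dot b y + dot x c * dot d y)^*).
Proof.
move=> c d.
rewrite adj_col mul_col_row /PhiU !block_mxKul !block_mxKur !block_mxKdl !block_mxKdr.
rewrite !trace_dot !tr_outer -/c -/d.
rewrite -scalemxAl dotZr mul_block_col dot_col.
congr (_ * _).
rewrite blk_top blk_bot !outer2 !dotDr !dotZr.
rewrite (dotC b y) (dotC a x) (dotC d y) (dotC c x) rmorphD !rmorphM /=.
rewrite !conjCK. ring.
Qed.

End Phi2.


Section Phi3.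
Variable R : realType.
Local Notation C := (R[i]).
Local Notation conjC := (Num.Def.conjC : C -> C).
Variable N : nat.
Variable U : 'M[C]_(2 * N).
Hypothesis hU : U \is unitarymx.
Hypothesis hUT : U^T = - U.

Lemma orthU (a : 'cV[C]_(2*N)) : dot a (U *m map_mx conjC a) = 0.
Proof.
rewrite dotE.
pose f i j := (a i 0)^* * (U i j * (a j 0)^*).
have -> : \sum_i (a i 0)^* * (U *m map_mx conjC a) i 0 = \sum_i \sum_j f i j.
  apply: eq_bigr => i _; rewrite mxE mulr_sumr; apply: eq_bigr => j _; rewrite !mxE. done.
have fA i j : f j i = - f i j.
  have : U^T i j = (- U) i j by rewrite hUT.
  rewrite !mxE /f => ->. rewrite mulNr mulrN. congr (- _). ring.
set S := \sum_i _.
have : S = - S.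
  rewrite {1}/S exchange_big /= -sumrN; apply: eq_bigr => i _.
  rewrite -sumrN; apply: eq_bigr => j _; exact: fA.
move/eqP; rewrite -addr_eq0 -mulr2n mulrn_eq0 /=. by move/eqP.
Qed.

Lemma normU (v : 'cV[C]_(2*N)) : dot (U *m v) (U *m v) = dot v v.
Proof.
rewrite dot_mulmx mulmxA.
have -> : adjmx U *m U = 1%:M.
  have := unitarymxP hU => /mulmx1C. done.
by rewrite mul1mx.
Qed.

Lemma dot_conj n (a : 'cV[C]_n) : dot (map_mx conjC a) (map_mx conjC a) = dot a a.
Proof. rewrite !dotE; apply: eq_bigr => i _; rewrite !mxE conjCK mulrC. done. Qed.

Lemma Phi_ge0 (v phi : 'cV[C]_(2*N + 2*N)) :
  0 <= dot phi (PhiU U (v *m adjmx v) *m phi).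
Proof.
rewrite -[v]vsubmxK -[phi]vsubmxK Phi_form.
set a := usubmx v; set b := dsubmx v; set x := usubmx phi; set y := dsubmx phi.
rewrite mulr_ge0 ?invr_ge0 ?ler0n //.
apply: scalar_ineq; rewrite ?dot_ge0 //.
  by apply: bessel; rewrite ?orthU ?normU ?dot_conj.
rewrite (dotC y b) (dotC y (U *m map_mx conjC b)) !norm_conjC.
by apply: bessel; rewrite ?orthU ?normU ?dot_conj.
Qed.

Lemma Phi_zero (v : 'cV[C]_(2*N + 2*N)) :
  dot v (PhiU U (v *m adjmx v) *m v) = 0.
Proof.
rewrite -[v]vsubmxK Phi_form.
set a := usubmx v; set b := dsubmx v.
rewrite orthU (dotC b (U *m map_mx conjC b)) orthU conjC0 !mul0r !addr0.
rewrite rmorphM /= !dot_real.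
have -> : dot b b * dot a a + dot a a * dot b b - dot a a * dot b b -
  dot a a * dot b b = 0 by ring.
by rewrite mulr0.
Qed.

End Phi3.


Section W.
Variable R : realType.
Local Notation C := (R[i]).
Local Notation conjC := (Num.Def.conjC : C -> C).

Lemma adj_tens m n p q (A : 'M[C]_(m, n)) (B : 'M[C]_(p, q)) :
  adjmx (A *t B) = adjmx A *t adjmx B.
Proof. apply/matrixP => i j; rewrite !mxE rmorphM. done. Qed.

Lemma tens11 (A B : 'M[C]_1) : (A *t B) ord0 ord0 = A 0 0 * B 0 0.
Proof.
rewrite mxE; set i := mxtens_unindex _.
by rewrite (ord1 i.1) (ord1 i.2).
Qed.

Lemma quad_delta n (psi : 'cV[C]_n) k l :
  (adjmx psi *m delta_mx k l *m psi) 0 0 = (psi k 0)^* * psi l 0.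
Proof.
rewrite -(mul_delta_mx (0 : 'I_1)) mulmxA -colE -mulmxA -rowE mxE big_ord1 !mxE. done.
Qed.

Lemma dot_sumr n (I : Type) (r : seq I) (P : pred I) (u : 'cV[C]_n) F :
  dot u (\sum_(i <- r | P i) F i) = \sum_(i <- r | P i) dot u (F i).
Proof. exact: (big_morph (dot u) (fun x y => dotDr x y u) (dot0r u)). Qed.

Lemma outer_sum n (psi : 'cV[C]_n) :
  map_mx conjC psi *m adjmx (map_mx conjC psi) =
  \sum_k \sum_l ((psi k 0)^* * psi l 0) *: delta_mx k l.
Proof.
rewrite {1}[_ *m _]matrix_sum_delta; apply: eq_bigr => k _; apply: eq_bigr => l _.
congr (_ *: _); rewrite mxE big_ord1 !mxE conjCK. done.
Qed.

Lemma QW (N : nat) (U : 'M[C]_(2 * N)) (psi phi : 'cV[C]_(2 * N + 2 * N)) :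
  (adjmx (psi *t phi) *m W_U U *m (psi *t phi)) ord0 ord0 =
  (4 * N)%:R^-1 * dot phi (PhiU U (map_mx conjC psi *m adjmx (map_mx conjC psi)) *m phi).
Proof.
rewrite adj_tens /W_U -scalemxAr -scalemxAl mxE; congr (_ * _).
rewrite outer_sum PhiU_sum mulmx_suml dot_sumr mulmx_sumr mulmx_suml summxE.
apply: eq_bigr => k _.
rewrite PhiU_sum mulmx_suml dot_sumr mulmx_sumr mulmx_suml summxE.
apply: eq_bigr => l _.
rewrite PhiUZ -scalemxAl dotZr !tensmx_mul tens11 quad_delta /dot mulmxA. done.
Qed.

End W.


Section F.
Variable R : realType.
Local Notation C := (R[i]).
Local Notation conjC := (Num.Def.conjC : C -> C).

Lemma quadE n (A : 'M[C]_n) v : (adjmx v *m A *m v) ord0 ord0 = dot v (A *m v).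
Proof. by rewrite /dot mulmxA. Qed.

Lemma psd_ker n (A : 'M[C]_n) u : psdmx A -> dot u (A *m u) = 0 -> A *m u = 0.
Proof.
move=> [hA hpos] h0.
set w := A *m u.
have hw : dot u (A *m w) = dot w w by rewrite dot_mulmx hA.
set Nn := dot w w; set K := dot w (A *m w).
have K0 : 0 <= K by rewrite /K -quadE hpos.
have K1 : 0 < K + 1 by rewrite ltr_wpDl.
set m := Nn / (K + 1).
have m0 : 0 <= m by rewrite divr_ge0 ?dot_ge0 // ltW.
have mr : m^* = m by apply: geC0_conj.
have := hpos (u - m *: w); rewrite quadE mulmxBr -scalemxAr.
rewrite !dotBl !dotBr !dotZl !dotZr h0 hw -/w -/Nn.
rewrite mr -/K => hq.
have E : (0 - m * Nn - (m * Nn - m * (m * K))) * (K + 1) ^+ 2 = - (Nn ^+ 2 * (K + 2)).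
  rewrite /m; field; by rewrite lt0r_neq0.
have : 0 <= - (Nn ^+ 2 * (K + 2)) by rewrite -E mulr_ge0 // exprn_ge0 // ltW.
rewrite oppr_ge0 => hle.
have K2 : 0 < K + 2 by rewrite ltr_wpDl.
have : Nn ^+ 2 * (K + 2) == 0.
  by rewrite eq_le hle mulr_ge0 // ?exprn_ge0 ?dot_ge0 // ltW.
rewrite mulf_eq0 expf_eq0 /= (negbTE (lt0r_neq0 K2)) orbF => /eqP.
exact: dot_eq0.
Qed.
Lemma tensmxDl m n p q (A B : 'M[C]_(m, n)) (D : 'M[C]_(p, q)) :
  (A + B) *t D = A *t D + B *t D.
Proof. apply/matrixP => i j; rewrite !mxE mulrDl. done. Qed.
Lemma tensmxDr m n p q (A : 'M[C]_(m, n)) (B D : 'M[C]_(p, q)) :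
  A *t (B + D) = A *t B + A *t D.
Proof. apply/matrixP => i j; rewrite !mxE mulrDr. done. Qed.
Lemma tensmxZl m n p q k (A : 'M[C]_(m, n)) (D : 'M[C]_(p, q)) :
  (k *: A) *t D = k *: (A *t D).
Proof. apply/matrixP => i j; rewrite !mxE mulrA. done. Qed.
Lemma tensmxZr m n p q k (A : 'M[C]_(m, n)) (D : 'M[C]_(p, q)) :
  A *t (k *: D) = k *: (A *t D).
Proof. apply/matrixP => i j; rewrite !mxE mulrCA. done. Qed.

Lemma conj_delta n (k : 'I_n) : map_mx conjC (delta_mx k 0 : 'cV[C]_n) = delta_mx k 0.
Proof. apply/matrixP => i j; rewrite !mxE rmorph_nat. done. Qed.

Lemma conj_comb n (k l : 'I_n) (t : C) :
  map_mx conjC (delta_mx k 0 + t *: delta_mx l 0 : 'cV[C]_n) = delta_mx k 0 + t^* *: delta_mx l 0.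
Proof. apply/matrixP => i j; rewrite !mxE rmorphD rmorphM /= !rmorph_nat. done. Qed.

Lemma tens_delta n (k l : 'I_n) :
  (delta_mx k 0 : 'cV[C]_n) *t (delta_mx l 0 : 'cV[C]_n) = delta_mx (mxtens_index (k, l)) ord0.
Proof.
apply/matrixP => i j.
case: (mxtens_indexP i) => i1 i2; case: (mxtens_indexP j) => j1 j2.
rewrite tensmxE !mxE (ord1 j1) (ord1 j2).
have -> : mxtens_index (ord0 : 'I_1, ord0 : 'I_1) = ord0 by apply: val_inj.
rewrite (inj_eq (can_inj (@mxtens_indexK _ _))) xpair_eqE !eqxx !andbT.
by case: (i1 == k); case: (i2 == l); rewrite /= ?mulr1 ?mulr0 ?mul0r.
Qed.

Lemma span_zero n (A : 'M[C]_(n * n)) :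
  (forall psi : 'cV[C]_n, A *m (psi *t map_mx conjC psi) = 0) -> A = 0.
Proof.
move=> h.
have hkl (k l : 'I_n) : A *m ((delta_mx k 0 : 'cV[C]_n) *t (delta_mx l 0 : 'cV[C]_n)) = 0.
  have hk := h (delta_mx k 0); have hl := h (delta_mx l 0).
  rewrite conj_delta in hk; rewrite conj_delta in hl.
  have ht (t : C) : t^* *: (A *m ((delta_mx k 0 : 'cV[C]_n) *t (delta_mx l 0 : 'cV[C]_n))) +
       t *: (A *m ((delta_mx l 0 : 'cV[C]_n) *t (delta_mx k 0 : 'cV[C]_n))) = 0.
    have := h (delta_mx k 0 + t *: delta_mx l 0).
    rewrite conj_comb !tensmxDl !tensmxDr !tensmxZl !tensmxZr !mulmxDr -!scalemxAr hk hl.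
    by rewrite !scaler0 !addr0 add0r.
  have h1 := ht 1; have hi := ht 'i.
  rewrite conjC1 !scale1r in h1.
  move/eqP: h1; rewrite addr_eq0 => /eqP h1.
  rewrite h1 conjCi scalerN -scaleNr -scalerDl in hi.
  move/eqP: hi; rewrite scaler_eq0 => /orP [|/eqP Y0]; last by rewrite h1 Y0 oppr0.
  by rewrite opprK -mulr2n mulrn_eq0 /= (negbTE (neq0Ci _)).
apply/matrixP => i j; case: (mxtens_indexP j) => k l.
have := congr1 (fun M : 'M[C]_(n * n, 1 * 1) => M i ord0) (hkl k l).
rewrite tens_delta -colE !mxE. done.
Qed.

End F.


Lemma subEntry (R : realType) m n (X Y : 'M[R[i]]_(m, n)) i j : (X - Y) i j = X i j - Y i j.
Proof. by rewrite !mxE. Qed.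

Unset Implicit Arguments.
Theorem proposition3 (R : realType) (N : nat) (hN : (1 <= N)%N)
  (U : 'M[R[i]]_(2 * N)) (hU : U \is unitarymx) (hUT : U^T = - U) :
  optimal_EW (W_U U).
Proof.
have bpW : block_positive (W_U U).
  move=> psi phi; rewrite QW mulr_ge0 ?invr_ge0 ?ler0n //; exact: (Phi_ge0 hU hUT).
have core : forall A, psdmx A -> block_positive (W_U U - A) -> A = 0.
  move=> A hA hb; apply: span_zero => psi.
  apply: (psd_ker hA).
  have h1 := hb psi (map_mx (Num.Def.conjC : R[i] -> R[i]) psi).
  have h2 := (proj2 hA) (psi *t map_mx (Num.Def.conjC : R[i] -> R[i]) psi).
  rewrite mulmxBr mulmxBl subEntry QW (Phi_zero hUT) mulr0 sub0r oppr_ge0 in h1.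
  rewrite quadE in h1 h2.
  by apply/eqP; rewrite eq_le h1 h2.
split; [split|].
- exact: bpW.
- move=> hW.
  have W0 : W_U U = 0.
    apply: (core _ hW); rewrite subrr => psi phi; rewrite mulmx0 mul0mx mxE. done.
  have i0 : 'I_(2 * N) by exists 0%N; rewrite muln_gt0 hN.
  pose a : 'cV[R[i]]_(2 * N) := const_mx 1.
  have := QW U (map_mx (Num.Def.conjC : R[i] -> R[i]) (col_mx a (0 : 'cV[R[i]]_(2 * N)))) (col_mx (0 : 'cV[R[i]]_(2 * N)) a).
  have -> : map_mx (Num.Def.conjC : R[i] -> R[i]) (map_mx (Num.Def.conjC : R[i] -> R[i]) (col_mx a (0 : 'cV[R[i]]_(2 * N)))) = col_mx a (0 : 'cV[R[i]]_(2 * N)).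
    apply/matrixP => i j; rewrite !mxE conjCK. done.
  rewrite Phi_form W0 mulmx0 mul0mx mxE !dot0l !mul0r !add0r conjC0 !subr0.
  move/esym/eqP; rewrite !mulf_eq0 !invr_eq0 !pnatr_eq0 !muln_eq0 /=.
  have hN0 : (N == 0%N) = false by rewrite eqn0Ngt hN.
  rewrite hN0 /= orbb => /eqP ha.
  have a0 : a = 0 by apply: dot_eq0.
  have := congr1 (fun M : 'M[R[i]]_(2 * N, 1) => M i0 0) a0.
  rewrite !mxE => /eqP; rewrite oner_eq0. done.
- move=> [A [hA0 [hA hb]]].
  by move: hA0; rewrite (core A hA hb) eqxx.
Qed.
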